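(* Let $T\ge1$ and $d_1,\dots,d_T\in\{0,1,2,\dots\}$. For $t\in[T]$ let $m_t=\{\tau\in[t-1]:\tau+d_\tau\ge t\}$, let $\sigma_{\max}=\max_{t\in[T]}|m_t|$, and for $S\subseteq[T]$ let $\sigma_{\max}^S=\max_{\tau\in[T]}|m_\tau\cap S|$ and $\bar S=[T]\setminus S$. Then $$\sigma_{\max}=\min_{S\subseteq[T]}\left(|S|+\sigma_{\max}^{\bar S}\right).$$
   Context: $[k]=\{1,\dots,k\}$, $[0]=\emptyset$. *)

(* Defs.v *)
From mathcomp Require Import all_boot.
Set Implicit Arguments. Unset Strict Implicit. Unset Printing Implicit Defensive.

(* Indexing convention: the time steps [T] = {1,...,T} are represented by
   the ordinal type 'I_T, the ordinal i standing for the time step i+1.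
   The conditions "tau <= t-1" and "tau + d_tau >= t" are invariant under
   this shift. *)

Definition mset (T : nat) (d : 'I_T -> nat) (t : 'I_T) : {set 'I_T} :=
  [set tau : 'I_T | (tau < t) && (t <= tau + d tau)].

(* sigma_max = max_{t in [T]} |m_t|  (0 for empty max, irrelevant as T >= 1) *)
Definition sigma_max (T : nat) (d : 'I_T -> nat) : nat :=
  \max_(t : 'I_T) #|mset d t|.

Definition sigma_max_on (T : nat) (d : 'I_T -> nat) (S : {set 'I_T}) : nat :=
  \max_(tau : 'I_T) #|mset d tau :&: S|.

Definition cost (T : nat) (d : 'I_T -> nat) (S : {set 'I_T}) : nat :=
  #|S| + sigma_max_on d (~: S).

Definition min_cost (T : nat) (d : 'I_T -> nat) : nat :=
  cost d [arg min_(S < set0) cost d S].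

(* Main.v *)
Require Import Defs.
From mathcomp Require Import all_boot.

Theorem lemmaA8 (T : nat) (hT : 1 <= T) (d : 'I_T -> nat) :
  sigma_max d = min_cost d.
Proof.
rewrite /min_cost; case: arg_minnP => // S _ HS.
apply/eqP; rewrite eqn_leq; apply/andP; split.
- rewrite /sigma_max; apply/bigmax_leqP => t _.
  rewrite -(cardsID S (mset d t)) /cost.
  apply: leq_add; first by apply: subset_leq_card; apply: subsetIr.
  rewrite setDE /sigma_max_on; exact: (leq_bigmax t).
- apply: leq_trans (HS set0 isT) _.
  rewrite /cost cards0 /sigma_max_on setC0 add0n.
  by under eq_bigr => t _ do rewrite setIT.
Qed.
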